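(* Let $\gamma>0$, $\tau>3$, $\alpha\in D_{\gamma,\tau}$, and let $p_n/q_n$ be the convergents of $\alpha$; for even $n$ let $I_n:=\left(\frac{p_n}{q_n},\frac{p_{n+2}}{q_{n+2}}\right)$. There exists $N_1\in\mathbb{N}$ such that for every even $n>N_1$ and every rational $p/q$ ($q\in\mathbb{N}$): $$\frac{p}{q}\in I_n,\ q<q_{n+2}\ \Longrightarrow\ \frac{p}{q}+\frac{\gamma}{q^{\tau+1}}<\frac{p_{n+2}}{q_{n+2}}-\frac{\gamma}{q_{n+2}^{\tau+1}}-\frac{2\gamma}{q_{n+2}^{\tau-1}}.$$
   Context: For $x\in\mathbb{R}$, $\|x\|:=\min_{p\in\mathbb{Z}}|x-p|$; $\mathbb{N}=\{1,2,\dots\}$. For $\gamma>0,\tau\ge1$, $D_{\gamma,\tau}:=\{\alpha\in(0,1): \|q\alpha\|\ge\gamma/q^\tau\ \forall q\in\mathbb{N}\}$; its elements are irrational. For irrational $\alpha\in(0,1)$ write $\alpha=\cfrac{1}{a_1+\cfrac{1}{a_2+\cdots}}$, and let $p_n/q_n$ ($n\ge0$) be its convergents: $p_{-1}=1,q_{-1}=0,p_0=0,q_0=1$, $p_n=a_np_{n-1}+p_{n-2}$, $q_n=a_nq_{n-1}+q_{n-2}$. *)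

(* Defs.v *)
From Stdlib Require Import Reals ZArith Arith.
Open Scope R_scope.

(* ||x|| = min_{p in Z} |x - p| : the nearest integer is floor x or floor x + 1. *)
Definition distZ (x : R) : R :=
  Rmin (Rabs (x - IZR (Int_part x))) (Rabs (x - IZR (Int_part x + 1))).

Definition Dgt (gamma tau alpha : R) : Prop :=
  0 < alpha < 1 /\
  forall q : nat, (1 <= q)%nat -> distZ (INR q * alpha) >= gamma / Rpower (INR q) tau.

Fixpoint cf_x (alpha : R) (n : nat) : R :=
  match n with
  | O => alpha
  | S m => / cf_x alpha m - IZR (Int_part (/ cf_x alpha m))
  end.

(* partial quotients a_n, n >= 1: a_{n} = floor(1 / x_{n-1}) *)
Definition cf_a (alpha : R) (n : nat) : Z := Int_part (/ cf_x alpha (n - 1)).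

(* cf_pq alpha n = ((p_{n-1}, q_{n-1}), (p_n, q_n)) *)
Fixpoint cf_pq (alpha : R) (n : nat) : (Z * Z) * (Z * Z) :=
  match n with
  | O => ((1%Z, 0%Z), (0%Z, 1%Z))
  | S m =>
      let '((pm, qm), (p, q)) := cf_pq alpha m in
      ((p, q), (cf_a alpha (S m) * p + pm, cf_a alpha (S m) * q + qm)%Z)
  end.

Definition cf_p (alpha : R) (n : nat) : Z := fst (snd (cf_pq alpha n)).
Definition cf_q (alpha : R) (n : nat) : Z := snd (snd (cf_pq alpha n)).

(* Main.v *)
Require Import Defs.
From Stdlib Require Import Reals ZArith Arith Lia Lra.
Open Scope R_scope.

Definition pmv (al : R) k := fst (fst (cf_pq al k)).
Definition qmv (al : R) k := snd (fst (cf_pq al k)).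

Lemma pq_S al m :
  cf_p al (S m) = (cf_a al (S m) * cf_p al m + pmv al m)%Z /\
  cf_q al (S m) = (cf_a al (S m) * cf_q al m + qmv al m)%Z /\
  pmv al (S m) = cf_p al m /\ qmv al (S m) = cf_q al m.
Proof.
  unfold cf_p, cf_q, pmv, qmv; simpl.
  destruct (cf_pq al m) as [[a b] [c d]]; simpl; auto.
Qed.

Lemma det_S al m :
  (cf_p al (S m) * qmv al (S m) - pmv al (S m) * cf_q al (S m)
   = - (cf_p al m * qmv al m - pmv al m * cf_q al m))%Z.
Proof.
  destruct (pq_S al m) as [H1 [H2 [H3 H4]]]. rewrite H1, H2, H3, H4. ring.
Qed.

Lemma det_even al m :
  (cf_p al (2*m) * qmv al (2*m) - pmv al (2*m) * cf_q al (2*m) = -1)%Z.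
Proof.
  induction m.
  - reflexivity.
  - replace (2 * S m)%nat with (S (S (2*m))) by lia.
    rewrite !det_S, IHm. ring.
Qed.

Lemma x_bound al k : 0 < al < 1 -> 0 <= cf_x al k < 1.
Proof.
  intros H; destruct k; simpl; [lra|].
  destruct (base_fp (/ cf_x al k)) as [A B]; unfold frac_part in *; lra.
Qed.

Lemma cf_a_S al k : cf_a al (S k) = Int_part (/ cf_x al k).
Proof. unfold cf_a. now rewrite Nat.sub_succ, Nat.sub_0_r. Qed.

Lemma a_ge1 al k : 0 < cf_x al k < 1 -> (1 <= cf_a al (S k))%Z.
Proof.
  intros H. rewrite cf_a_S.
  destruct (base_Int_part (/ cf_x al k)) as [A B].
  assert (1 < / cf_x al k).
  { rewrite <- Rinv_1. apply Rinv_lt_contravar; lra. }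
  assert (0 < IZR (Int_part (/ cf_x al k))) by lra.
  apply lt_IZR in H1. lia.
Qed.

Lemma ident al k : 0 < al < 1 ->
  (forall j, (j < k)%nat -> 0 < cf_x al j) ->
  al * (IZR (cf_q al k) + cf_x al k * IZR (qmv al k))
   = IZR (cf_p al k) + cf_x al k * IZR (pmv al k)
  /\ (1 <= cf_q al k)%Z /\ (0 <= qmv al k <= cf_q al k)%Z
  /\ (Z.of_nat k <= cf_q al k)%Z /\ (k = 0%nat \/ 1 <= qmv al k)%Z.
Proof.
  intros Hal. induction k as [|k IH]; intros Hx.
  - unfold cf_q, cf_p, pmv, qmv; simpl. split; [lra|]. lia.
  - destruct IH as [Id [Hq [Hqm [Hk Hk0]]]].
    { intros j Hj; apply Hx; lia. }
    assert (Hxk : 0 < cf_x al k < 1).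
    { split; [apply Hx; lia| apply (x_bound al k Hal)]. }
    pose proof (a_ge1 al k Hxk) as Ha.
    destruct (pq_S al k) as [H1 [H2 [H3 H4]]].
    rewrite H1, H2, H3, H4.
    split.
    2:{ split; [nia|]. split; [nia|]. split; [nia|]. right; lia. }
    assert (Hy : cf_x al (S k) = / cf_x al k - IZR (cf_a al (S k))).
    { simpl. rewrite cf_a_S. reflexivity. }
    rewrite Hy. rewrite !plus_IZR, !mult_IZR.
    set (x := cf_x al k) in *.
    set (a := IZR (cf_a al (S k))).
    assert (Hinv : x * / x = 1) by (apply Rinv_r; lra).
    set (y := / x) in *.
    apply (Rmult_eq_reg_l x); [|lra].
    transitivity (al * (IZR (cf_q al k) + x * IZR (qmv al k)) * (x*y)).
    + transitivity (al * (IZR (cf_q al k) * (x*y) + x * IZR (qmv al k))); [ring|].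
      rewrite Hinv; ring.
    + rewrite Id. transitivity (IZR (cf_p al k) * (x*y) + x * IZR (pmv al k)); [|ring].
      rewrite Hinv; ring.
Qed.

Lemma distZ_le x z : distZ x <= Rabs (x - IZR z).
Proof.
  unfold distZ. destruct (base_Int_part x) as [A B].
  set (f := Int_part x) in *.
  destruct (Z_le_gt_dec z f) as [H|H].
  - apply IZR_le in H. eapply Rle_trans; [apply Rmin_l|].
    rewrite !Rabs_right; lra.
  - assert (H' : (f + 1 <= z)%Z) by lia. apply IZR_le in H'. rewrite plus_IZR in H'.
    eapply Rle_trans; [apply Rmin_r|].
    rewrite plus_IZR. rewrite !Rabs_left1; lra.
Qed.

Lemma INR_toZ (z : Z) : (0 <= z)%Z -> INR (Z.to_nat z) = IZR z.
Proof. intros H. rewrite INR_IZR_INZ, Z2Nat.id; auto. Qed.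

Lemma all_pos g t al : 0 < g -> Dgt g t al -> forall k, 0 < cf_x al k.
Proof.
  intros Hg [Hal HD].
  assert (forall k j, (j <= k)%nat -> 0 < cf_x al j).
  { induction k; intros j Hj.
    - replace j with 0%nat by lia. simpl; lra.
    - destruct (Nat.eq_dec j (S k)) as [->|Hne]; [|apply IHk; lia].
      destruct (ident al (S k) Hal) as [Id [Hq _]].
      { intros i Hi; apply IHk; lia. }
      destruct (x_bound al (S k) Hal) as [X0 X1].
      destruct X0 as [X0|X0]; auto. exfalso.
      rewrite <- X0 in Id.
      assert (E : al * IZR (cf_q al (S k)) = IZR (cf_p al (S k))) by lra.
      specialize (HD (Z.to_nat (cf_q al (S k)))).
      assert (L : (1 <= Z.to_nat (cf_q al (S k)))%nat) by lia.
      specialize (HD L). rewrite INR_toZ in HD by lia.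
      rewrite Rmult_comm, E in HD.
      pose proof (distZ_le (IZR (cf_p al (S k))) (cf_p al (S k))) as DL.
      rewrite Rminus_diag, Rabs_R0 in DL.
      assert (0 < g / Rpower (IZR (cf_q al (S k))) t).
      { apply Rdiv_lt_0_compat; auto. unfold Rpower; apply exp_pos. }
      lra. }
  intros k; apply (H k); lia.
Qed.

Lemma final_real g q Q k A W x y : 0 < g -> 1 <= q -> q < Q -> 0 < A -> 0 < W ->
  16 * g <= W -> 1 <= k -> g * Q <= (k - 1/2) * A -> y - x = k / (q * Q) ->
  x + g / (q * A) < y - g / (Q^4 * W) - 2 * g / (Q^2 * W).
Proof.
  intros Hg Hq HqQ HA HW HWg Hk Hc Hyx.
  assert (HQ : 1 < Q) by lra.
  assert (h1 : g / (q * A) <= (k - 1/2) / (q * Q)).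
  { replace (g / (q * A)) with ((g*Q) * / (q*Q*A)) by (field; repeat split; lra).
    replace ((k - 1/2) / (q * Q)) with (((k-1/2)*A) * / (q*Q*A)) by (field; repeat split; lra).
    apply Rmult_le_compat_r; auto. left; apply Rinv_0_lt_compat; repeat apply Rmult_lt_0_compat; try apply pow_lt; lra. }
  assert (h2 : 1 / (Q * Q) < 1 / (q * Q)).
  { replace (1 / (Q * Q)) with (q * / (q*Q*Q)) by (field; repeat split; lra).
    replace (1 / (q * Q)) with (Q * / (q*Q*Q)) by (field; repeat split; lra).
    apply Rmult_lt_compat_r; auto. apply Rinv_0_lt_compat; repeat apply Rmult_lt_0_compat; try apply pow_lt; lra. }
  assert (h3 : g / (Q^4 * W) <= 1/16 * (1 / (Q*Q))).
  { replace (g / (Q^4 * W)) with ((16 * g) * / (16*Q^4*W)) by (field; repeat split; nra).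
    replace (1/16 * (1 / (Q*Q))) with ((Q*Q*W) * / (16*Q^4*W)) by (field; repeat split; nra).
    apply Rmult_le_compat_r; [left; apply Rinv_0_lt_compat; repeat apply Rmult_lt_0_compat; try apply pow_lt; lra|]. assert (1 <= Q*Q) by nra. assert (W <= Q*Q*W) by nra. lra. }
  assert (h4 : 2 * g / (Q^2 * W) <= 2/16 * (1 / (Q*Q))).
  { replace (2 * g / (Q^2 * W)) with ((16 * g) * / (8*Q^2*W)) by (field; repeat split; nra).
    replace (2/16 * (1 / (Q*Q))) with (W * / (8*Q^2*W)) by (field; repeat split; nra).
    apply Rmult_le_compat_r; [left; apply Rinv_0_lt_compat; repeat apply Rmult_lt_0_compat; try apply pow_lt; lra|]. lra. }
  assert (h5 : k / (q*Q) = (k - 1/2)/(q*Q) + 1/2 * (1/(q*Q))) by (field; repeat split; lra).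
  assert (0 < 1 / (Q*Q)) by (apply Rdiv_lt_0_compat; nra).
  lra.
Qed.

Lemma frac_lt a b c d : 0 < b -> 0 < d -> a / b < c / d -> a * d < c * b.
Proof.
  intros Hb Hd H.
  replace (a * d) with ((a / b) * (b * d)) by (field; lra).
  replace (c * b) with ((c / d) * (b * d)) by (field; lra).
  apply Rmult_lt_compat_r; nra.
Qed.

Lemma frac_ltZ a b c d : (0 < b)%Z -> (0 < d)%Z -> IZR a / IZR b < IZR c / IZR d -> (a * d < c * b)%Z.
Proof.
  intros Hb Hd H. apply lt_IZR. rewrite !mult_IZR. apply frac_lt; auto; apply IZR_lt; auto.
Qed.

Lemma Rpower_pos x y : 0 < Rpower x y.
Proof. unfold Rpower; apply exp_pos. Qed.

Theorem lemma2 :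
  forall (gamma tau alpha : R),
    0 < gamma -> 3 < tau -> Dgt gamma tau alpha ->
    exists N1 : nat, (1 <= N1)%nat /\
      forall n : nat, Nat.Even n -> (N1 < n)%nat ->
      forall (p : Z) (q : nat), (1 <= q)%nat ->
        let pn := IZR (cf_p alpha n) / IZR (cf_q alpha n) in
        let qn2 := IZR (cf_q alpha (n + 2)) in
        let pn2 := IZR (cf_p alpha (n + 2)) / qn2 in
        pn < IZR p / INR q < pn2 ->
        INR q < qn2 ->
        IZR p / INR q + gamma / Rpower (INR q) (tau + 1)
          < pn2 - gamma / Rpower qn2 (tau + 1) - 2 * gamma / Rpower qn2 (tau - 1).
Proof.
  intros g t al Hg Ht HD.
  pose proof (proj1 HD) as Hal.
  pose proof (all_pos g t al Hg HD) as Hx.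
  set (C := Rpower 2 (t + 1) * g).
  assert (HC : 0 < C) by (apply Rmult_lt_0_compat; [apply Rpower_pos|lra]).
  set (M := Rpower C (/ (t - 3))).
  assert (HM : 0 < M) by apply Rpower_pos.
  assert (HMC : Rpower M (t - 3) = C).
  { unfold M. rewrite Rpower_mult. rewrite Rinv_l by lra. apply Rpower_1; auto. }
  exists (S (Z.to_nat (up M))). split; [lia|].
  intros n Hev Hn p q Hq. cbv zeta. intros Hin Hlt.
  destruct Hev as [m Hm].
  replace (n + 2)%nat with (S (S n)) in * by lia.
  destruct (pq_S al n) as [_ [_ [E1 E2]]].
  destruct (pq_S al (S n)) as [_ [_ [E3 E4]]].
  pose proof (det_even al m) as D0. rewrite <- Hm in D0.
  pose proof (det_S al n) as D1. rewrite D0, E1, E2 in D1.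
  pose proof (det_S al (S n)) as D2. rewrite E1, E2, E3, E4, D1 in D2.
  destruct (ident al n Hal (fun j _ => Hx j)) as [_ [Hq0 _]].
  destruct (ident al (S n) Hal (fun j _ => Hx j)) as [_ [Hq1 [Hqm1 _]]].
  destruct (ident al (S (S n)) Hal (fun j _ => Hx j)) as [Id2 [Hq2 [Hqm2 [Hk2 _]]]].
  rewrite E2 in Hqm1. rewrite E4 in Hqm2. rewrite E3, E4 in Id2.
  set (P0 := cf_p al n) in *. set (Q0 := cf_q al n) in *.
  set (P1 := cf_p al (S n)) in *. set (Q1 := cf_q al (S n)) in *.
  set (P2 := cf_p al (S (S n))) in *. set (Q2 := cf_q al (S (S n))) in *.
  set (xx := cf_x al (S (S n))) in *.
  assert (Hxx : 0 < xx) by apply Hx.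
  set (qz := Z.of_nat q).
  assert (Hqz : INR q = IZR qz) by apply INR_IZR_INZ.
  rewrite Hqz in *.
  assert (Hqz1 : (1 <= qz)%Z) by lia.
  destruct Hin as [Hin1 Hin2].
  apply frac_ltZ in Hin1; [|lia|lia].
  apply frac_ltZ in Hin2; [|lia|lia].
  apply lt_IZR in Hlt.
  set (k := (P2 * qz - p * Q2)%Z).
  set (m1 := (p * Q0 - P0 * qz)%Z).
  set (m2 := (P1 * qz - p * Q1)%Z).
  assert (Hk : (1 <= k)%Z) by (unfold k; lia).
  assert (Hm1 : (1 <= m1)%Z) by (unfold m1; lia).
  assert (Em2 : (m2 * Q2 = k * Q1 + qz)%Z).
  { unfold m2, k. transitivity (qz * (-(P2 * Q1 - P1 * Q2)) + (P2 * qz - p * Q2) * Q1)%Z; [ring|].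
    rewrite D2. ring. }
  assert (Hm2 : (1 <= m2)%Z).
  { assert (0 < m2 * Q2)%Z by (clear - Em2 Hk Hq1 Hqz1; nia). destruct (Z_lt_le_dec 0 m2); [lia|].
    assert (m2 * Q2 <= 0)%Z by (apply Z.mul_nonpos_nonneg; lia). lia. }
  assert (Eq : (qz = m1 * Q1 + m2 * Q0)%Z).
  { unfold m1, m2. transitivity (qz * (P1 * Q0 - P0 * Q1) )%Z; [rewrite D1; ring| ring]. }
  assert (HqQ1 : (Q1 + Q0 <= qz)%Z).
  { rewrite Eq. assert (Q1 <= m1 * Q1)%Z by (clear - Hm1 Hq1; nia). assert (Q0 <= m2 * Q0)%Z by (clear - Hm2 Hq0; nia). lia. }
  assert (Hk1 : k = 1%Z -> (Q2 < 2 * qz)%Z).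
  { intros Hk1. rewrite Hk1 in Em2.
    assert (Hlt2 : (m2 * Q2 < 2 * Q2)%Z) by lia.
    assert (m2 < 2)%Z by (clear - Hlt2 Hq2; nia).
    assert (Hm21 : m2 = 1%Z) by lia. rewrite Hm21 in Em2. lia. }
  assert (HQ2pos : 0 < IZR Q2) by (apply IZR_lt; lia).
  assert (HQ1pos : 0 < IZR Q1) by (apply IZR_lt; lia).
  assert (Hqpos : 0 < IZR qz) by (apply IZR_lt; lia).
  assert (Hdio : g * IZR Q2 <= Rpower (IZR Q1) t).
  { destruct HD as [_ HD]. specialize (HD (Z.to_nat Q1)).
    assert (L : (1 <= Z.to_nat Q1)%nat) by lia. specialize (HD L).
    rewrite INR_toZ in HD by lia.
    pose proof (distZ_le (IZR Q1 * al) P1) as DL.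
    idtac.
    assert (Hpx : 0 < xx * IZR Q1) by (apply Rmult_lt_0_compat; lra).
    assert (Hden : 0 < IZR Q2 + xx * IZR Q1) by lra.
    assert (E : (IZR Q1 * al - IZR P1) * (IZR Q2 + xx * IZR Q1) = -1).
    { apply (f_equal IZR) in D2. rewrite minus_IZR, !mult_IZR in D2.
      transitivity (IZR Q1 * (al * (IZR Q2 + xx * IZR Q1)) - IZR P1 * (IZR Q2 + xx * IZR Q1)); [ring|].
      rewrite Id2. transitivity (IZR P2 * IZR Q1 - IZR P1 * IZR Q2); [ring|]. rewrite D2. reflexivity. }
    assert (E' : IZR Q1 * al - IZR P1 = - / (IZR Q2 + xx * IZR Q1)).
    { field_simplify_eq; [lra|lra]. }
    rewrite E', Rabs_Ropp, Rabs_right in DL by (left; apply Rinv_0_lt_compat; lra).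
    assert (I1 : / (IZR Q2 + xx * IZR Q1) <= / IZR Q2).
    { apply Rinv_le_contravar; lra. }
    assert (I2 : g / Rpower (IZR Q1) t <= / IZR Q2) by lra.
    pose proof (Rpower_pos (IZR Q1) t) as RP.
    apply (Rmult_le_compat_r (IZR Q2 * Rpower (IZR Q1) t)) in I2; [|left; apply Rmult_lt_0_compat; lra].
    replace (g / Rpower (IZR Q1) t * (IZR Q2 * Rpower (IZR Q1) t)) with (g * IZR Q2) in I2
      by (field; lra).
    replace (/ IZR Q2 * (IZR Q2 * Rpower (IZR Q1) t)) with (Rpower (IZR Q1) t) in I2
      by (field; lra).
    exact I2. }
  set (A := Rpower (IZR qz) t).
  assert (HA : Rpower (IZR Q1) t <= A).
  { apply Rle_Rpower_l; [lra|]. split; [lra|]. apply IZR_le; lia. }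
  set (W := Rpower (IZR Q2) (t - 3)).
  assert (HW : C < W).
  { rewrite <- HMC. apply Rlt_Rpower_l; [lra|]. split; [lra|].
    assert (U : M < IZR (up M)) by apply archimed.
    assert (U2 : (up M <= Z.of_nat (Z.to_nat (up M)))%Z) by lia.
    apply IZR_le in U2.
    assert (U3 : (Z.of_nat (Z.to_nat (up M)) < Q2)%Z) by lia.
    apply IZR_lt in U3. lra. }
  assert (H2t : Rpower 2 (t + 1) = 2 * Rpower 2 t).
  { rewrite Rplus_comm, Rpower_plus, Rpower_1; lra. }
  assert (H16 : 16 <= Rpower 2 (t + 1)).
  { replace 16 with (Rpower 2 (INR 4)).
    - left. apply Rpower_lt; [lra|]. simpl. lra.
    - rewrite Rpower_pow by lra. simpl. ring. }
  assert (HWg : 16 * g <= W).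
  { unfold C in HW. assert (16*g <= Rpower 2 (t+1) * g) by (apply Rmult_le_compat_r; lra). lra. }
  assert (HQ1 : 1 <= IZR Q2) by (apply IZR_le; lia).
  assert (Hcond : g * IZR Q2 <= (IZR k - 1/2) * A).
  { destruct (Z.eq_dec k 1) as [E|E].
    - specialize (Hk1 E). rewrite E.
      assert (HQq : IZR Q2 / 2 <= IZR qz).
      { apply IZR_lt in Hk1. rewrite mult_IZR in Hk1. lra. }
      assert (A1 : Rpower (IZR Q2 / 2) t <= A).
      { apply Rle_Rpower_l; lra. }
      assert (A2 : Rpower (IZR Q2 / 2) t * Rpower 2 t = Rpower (IZR Q2) t).
      { rewrite Rpower_mult_distr by lra. f_equal. field. }
      assert (A3 : Rpower (IZR Q2) t = IZR Q2 ^ 3 * W).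
      { unfold W. replace t with (INR 3 + (t - 3)) at 1 by (simpl; ring).
        rewrite Rpower_plus, Rpower_pow by lra. reflexivity. }
      pose proof (Rpower_pos 2 t) as P2t.
      assert (A4 : IZR Q2 ^ 3 * (2 * Rpower 2 t * g) <= Rpower (IZR Q2 / 2) t * Rpower 2 t).
      { rewrite A2, A3. unfold C in HW. rewrite H2t in HW.
        apply Rmult_le_compat_l; [apply pow_le; lra| lra]. }
      assert (A5 : IZR Q2 ^ 3 * 2 * g <= Rpower (IZR Q2 / 2) t).
      { apply (Rmult_le_reg_r (Rpower 2 t)); [lra|]. replace (IZR Q2 ^ 3 * 2 * g * Rpower 2 t) with (IZR Q2 ^ 3 * (2 * Rpower 2 t * g)) by ring. exact A4. }
      assert (A6 : IZR Q2 <= IZR Q2 ^ 3).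
      { simpl. clear - HQ1. nra. }
      assert (g*IZR Q2 <= g*IZR Q2^3) by (apply Rmult_le_compat_l; lra). lra.
    - assert (2 <= IZR k) by (apply IZR_le; lia).
      assert (0 < A) by apply Rpower_pos.
      assert (3/2 * A <= (IZR k - 1/2) * A) by (apply Rmult_le_compat_r; lra). lra. }
  assert (G1 : Rpower (IZR qz) (t + 1) = IZR qz * A).
  { rewrite Rplus_comm, Rpower_plus, Rpower_1 by lra. reflexivity. }
  assert (G2 : Rpower (IZR Q2) (t + 1) = IZR Q2 ^ 4 * W).
  { unfold W. replace (t + 1) with (INR 4 + (t - 3)) by (simpl; ring).
    rewrite Rpower_plus, Rpower_pow by lra. reflexivity. }
  assert (G3 : Rpower (IZR Q2) (t - 1) = IZR Q2 ^ 2 * W).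
  { unfold W. replace (t - 1) with (INR 2 + (t - 3)) by (simpl; ring).
    rewrite Rpower_plus, Rpower_pow by lra. reflexivity. }
  rewrite G1, G2, G3.
  apply final_real with (IZR k); try lra.
  all: first [ apply Rpower_pos | (apply IZR_le; lia) | (apply IZR_lt; lia) | (apply Rlt_trans with C; [lra|exact HW])
             | (unfold k; rewrite minus_IZR, !mult_IZR; field; lra) ].
Qed.
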